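(* Let $g:(0,\infty)\to(0,\infty)$ decrease monotonically to zero, let $b\ge2$, and assume that $\Lambda_g(u)/\log\log u$ is bounded from above for $u$ large enough. Then for every $\epsilon\in(0,(2d+1)^{-1})$ $$\mathbb P\Big[\liminf_{n\to\infty}\bigcap_{\mathfrak A\subseteq\mathfrak E(B_b),\,|\mathfrak A|\ge 2d+1}\ \bigcap_{z\in B_{n+b}}J_{g(n^{1-\epsilon})}(\mathfrak A\circ\tau_z)\Big]=1.$$
   Context: Let $d\ge2$, $\mathfrak E_d$ the nearest-neighbour edges of $\mathbb Z^d$. Conductances $(w_e)_{e\in\mathfrak E_d}$ are i.i.d. $(0,\infty)$-valued with law $\mathbb P$; $w$ a generic copy. $B_n=[-n,n]^d\cap\mathbb Z^d$. $\Lambda_g(u)=u^d\,\mathbb P[w\le g(u)]^{2d}$. For $\alpha>0$, $J_\alpha(\mathfrak A)=\{\exists e\in\mathfrak A: w_e>\alpha\}$. $\mathfrak E(A)=\{\{x,x+\boldsymbol e_j\}: x\in A,\ j\in\{1,\dots,d\}\}$. $\mathfrak A\circ\tau_z=\{\{x+z,y+z\}:\{x,y\}\in\mathfrak A\}$. $\liminf_n E_n=\bigcup_n\bigcap_{k\ge n}E_k$. *)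

(* Defs.v *)
From HB Require Import structures.
From mathcomp Require Import all_boot all_order all_algebra.
From mathcomp Require Import finmap.
From mathcomp Require Import all_classical all_reals all_analysis.
Set Implicit Arguments. Unset Strict Implicit. Unset Printing Implicit Defensive.
Import Order.TTheory GRing.Theory Num.Theory.
Local Open Scope classical_set_scope.
Local Open Scope ring_scope.

Definition vtx (d : nat) := {ffun 'I_d -> int}.

(* A nearest-neighbour edge {x, x + e_j} of Z^d is encoded (uniquely) by the
   pair (x, j) with j : 'I_d (the paper's j in {1,...,d}). *)
Definition edge (d : nat) := (vtx d * 'I_d)%type.

Definition box (d : nat) (n : nat) : set (vtx d) :=
  [set x | forall i : 'I_d, `|x i| <= n%:Z].

Definition edges_of (d : nat) (A : set (vtx d)) : set (edge d) :=
  [set e | A e.1].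

Definition shift_edge (d : nat) (e : edge d) (z : vtx d) : edge d :=
  ([ffun i => e.1 i + z i], e.2).

Definition shift_edges (d : nat) (A : {fset edge d}) (z : vtx d) : set (edge d) :=
  [set shift_edge e z | e in [set` A]].

Definition J_event (d : nat) (T : Type) (R : realType)
  (w : edge d -> T -> R) (alpha : R) (A : set (edge d)) : set T :=
  [set om | exists2 e, A e & alpha < w e om].

Definition liminf_set (T : Type) (E : nat -> set T) : set T :=
  \bigcup_n \bigcap_(k in [set k | (n <= k)%N]) E k.

Definition mutually_independent (dT : measure_display) (T : measurableType dT)
  (R : realType) (P : probability T R) (I : choiceType) (X : I -> T -> R) :=
  forall (F : {fset I}) (B : I -> set R),
    (forall i, i \in F -> measurable (B i)) ->
    P (\bigcap_(i in [set` F]) (X i @^-1` B i)) =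
    (\prod_(i <- F) P (X i @^-1` B i))%E.

(* Λ_g(u) = u^d P[w ≤ g(u)]^{2d}, where mu is the common law of the w_e *)
Definition Lambda (R : realType) (d : nat) (mu : probability R R) (g : R -> R)
  (u : R) : R :=
  u ^+ d * (fine (mu `]-oo, g u]%classic)) ^+ (2 * d).

(* Main.v *)
Require Import Defs.
From HB Require Import structures.
From mathcomp Require Import all_boot all_order all_algebra.
From mathcomp Require Import finmap.
From mathcomp Require Import all_classical all_reals all_analysis.
From mathcomp Require Import ring lra zify.
Import Order.TTheory GRing.Theory Num.Theory.
Local Open Scope ring_scope.

Section Analytic.
Variable R : realType.

Lemma u_expR (a : R) (k : nat) :
  ((2 ^ k)%:R : R) `^ a = expR (a * (k%:R * ln 2)).
Proof.
rewrite /powR ifF; last by apply/negbTE; rewrite pnatr_eq0 expn_eq0.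
by rewrite natrX lnXn // mulr_natl.
Qed.

Lemma test_ring (d k : nat) (x : R) : ((2 * d * d)%:R * x) = 2 * d%:R * d%:R * x.
Proof. ring. Qed.

Lemma poly_exp (m : nat) (g : R) (k : nat) : (0 < m)%N -> 0 < g ->
  (k%:R) ^+ m <= (m.+1)`!%:R / g ^+ m.+1 * expR (k%:R * g).
Proof.
move=> m0 g0.
have h := @expR_ge1Dxn R (k%:R * g) m (mulr_ge0 (ler0n _ _) (ltW g0)).
have km : (k%:R : R) ^+ m <= k%:R ^+ m.+1.
  case: (posnP k) => [->|kp]; first by rewrite !expr0n /= eqn0Ngt m0.
  by rewrite exprS ler_peMl // ?exprn_ge0 // ler1n.
apply: (le_trans km).
rewrite mulrAC ler_pdivlMr ?exprn_gt0 //.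
rewrite -exprMn.
have fpos : (0 : R) < (m.+1)`!%:R by rewrite ltr0n fact_gt0.
rewrite -ler_pdivrMl //.
rewrite mulrC; apply: le_trans h; rewrite lerDr //.
Qed.

End Analytic.

Section B.
Variable R : realType.

Lemma analytic (d : nat) (hd : (1 <= d)%N) (eps : R) (heps0 : 0 < eps)
  (heps1 : eps * (2*d+1)%:R < 1) (c1 : R) (hc1 : 0 <= c1) (b : nat) (C U : R)
  (p : nat -> R) (p0 : forall k, 0 <= p k)
  (hyp : forall k, U < ((2^k)%:R : R) `^ (1-eps) ->
     (((2^k)%:R : R) `^ (1-eps))^+d * p k ^+ (2*d) <=
        C * ln (ln (((2^k)%:R : R) `^ (1-eps)))) :
  exists (K r : R) (k0 : nat), 0 < r < 1 /\ forall k : nat,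
    c1 * (((2 * (2 ^ (k + k0).+1 + b) + 1) ^ d)%N)%:R * p (k+k0) ^+ (2*d+1) <= K * r^+k.
Proof.
set L := ln (2 : R).
have L0 : 0 < L by apply: ln_gt0; rewrite ltr1n.
set m := (2*d+1)%N.
have d0 : (0 : R) < d%:R by rewrite ltr0n.
have m1 : (1 : R) <= m%:R by rewrite ler1n /m addn1.
have eps1 : eps < 1.
  apply: le_lt_trans heps1; rewrite ler_peMr //; exact: ltW.
set a := 1 - eps.
have a0 : 0 < a by rewrite /a subr_gt0.
have a1 : a <= 1 by rewrite /a lerBlDr lerDl ltW.
set gam := L * d%:R * (1 - eps * m%:R).
have gam0 : 0 < gam by rewrite /gam !mulr_gt0 // subr_gt0.
set Umax := Num.max U 1.
have Umax1 : 1 <= Umax by rewrite /Umax le_max lexx orbT.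
have Umax0 : 0 < Umax by apply: lt_le_trans Umax1.
have lnU0 : 0 <= ln Umax by apply: ln_ge0.
have aL0 : 0 < a * L by apply: mulr_gt0.
set k0 := Num.Def.archi_bound ((ln Umax + 1) / (a * L)).
have hk0 : (ln Umax + 1) / (a * L) < k0%:R.
  by apply: archi_boundP; apply: divr_ge0 => //; [lra | exact: ltW].
set A := c1 ^+ (2*d) * ((2*b+5)%:R)^+(2*d*d) * (`|C| * L)^+m.
have A0 : 0 <= A by rewrite /A !mulr_ge0 // exprn_ge0 // mulr_ge0 // ltW.
set A' := A * ((m.+1)`!%:R / (gam/2)^+m.+1).
have A'0 : 0 <= A'.
  by rewrite /A' mulr_ge0 // divr_ge0 // exprn_ge0 // divr_ge0 // ltW.
set K := Num.max A' 1.
have K1 : 1 <= K by rewrite /K le_max lexx orbT.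
have K0 : 0 <= K by apply: le_trans K1.
have A'K : A' <= K ^+ (2*d).
  apply: (le_trans (y := K)); first by rewrite /K le_max lexx.
  have -> : (2*d)%N = (2*d).-1.+1 by rewrite prednK // muln_gt0 hd.
  by rewrite exprS ler_peMr // exprn_ege1.
set r := expR (- (gam / (4 * d%:R))).
exists K, r, k0; split.
  rewrite expR_gt0 /= expR_lt1 oppr_lt0; apply: divr_gt0 => //.
  by rewrite mulr_gt0.
move=> k; set n := (k + k0)%N; rewrite -/n.
have eqle : forall x y : R, x = y -> x <= y by move=> x y ->.
have kn : (k <= n)%N by rewrite leq_addr.
have k0n : (k0 <= n)%N by rewrite leq_addl.
have r0 : 0 <= r by apply: expR_ge0.
have r1 : r <= 1 by rewrite expR_le1 oppr_le0 divr_ge0 // ?ltW // mulr_gt0.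
apply: (le_trans (y := K * r ^+ n)); last first.
  by apply: ler_wpM2l => //; apply: ler_wiXn2l.
have hu := @u_expR R (1 - eps) n; rewrite -/a -/L in hu.
set Y := expR (a * (n%:R * L)).
have big : ln Umax + 1 <= a * (n%:R * L).
  have kk : (k0%:R : R) <= n%:R by rewrite ler_nat.
  have := lt_le_trans hk0 kk.
  rewrite ltr_pdivrMr // => h; apply: ltW; apply: (lt_le_trans h).
  by rewrite mulrA [n%:R * a]mulrC -mulrA mulrC.
have Y0 : 0 < Y by apply: expR_gt0.
have hU : U < Y.
  apply: (le_lt_trans (y := Umax)); first by rewrite /Umax le_max lexx.
  rewrite -(lnK (x := Umax)) ?posrE // /Y ltr_expR; lra.
have lnY : ln Y = a * (n%:R * L) by rewrite /Y expRK.
have hyp' := hyp n; rewrite hu in hyp'; have {hyp'} := hyp' hU.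
set Q := p n ^+ (2*d) => hyp'.
have Q0 : 0 <= Q by rewrite exprn_ge0.
have nL0 : 0 <= n%:R * L by rewrite mulr_ge0 // ltW.
have hQ : Y ^+ d * Q <= `|C| * L * n%:R.
  apply: (le_trans hyp'); rewrite lnY.
  have l0 : 0 <= ln (a * (n%:R * L)).
    by apply: ln_ge0; lra.
  have l1 : ln (a * (n%:R * L)) <= a * (n%:R * L).
    by apply: ltW; apply: ln_sublinear; lra.
  apply: (le_trans (y := `|C| * ln (a * (n%:R * L)))).
    by apply: ler_wpM2r => //; apply: real_ler_norm; apply: num_real.
  apply: (le_trans (y := `|C| * (a * (n%:R * L)))).
    by apply: ler_wpM2l.
  rewrite -mulrA; apply: ler_wpM2l => //.
  nra.
set X := expR (n%:R * L).
have X0 : 0 < X by apply: expR_gt0.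
have X2 : X = 2 ^+ n by rewrite /X expRM_natl lnK // posrE.
have hN : (((2 * (2 ^ n.+1 + b) + 1) ^ d)%N)%:R <= ((2*b+5)%:R * X) ^+ d.
  rewrite natrX; apply: lerXn2r; rewrite ?nnegrE //.
    by rewrite mulr_ge0 // ltW.
  rewrite X2 -natrX -natrM ler_nat expnS.
  have h1 := expn_gt0 2 n; move: h1; set X' := (2 ^ n)%N => h1.
  have h2 : (2*b+1 <= (2*b+1) * X')%N by rewrite leq_pmulr.
  rewrite (_ : (2*b+5) = 4 + (2*b+1))%N; last by rewrite addnCA.
  rewrite mulnDl mulnDr mulnA -addnA leq_add2l; exact: h2.
rewrite -(ler_pXn2r (n := (2*d)%N)) ?muln_gt0 ?hd // ?nnegrE; last 2 first.
- by rewrite !mulr_ge0 // exprn_ge0.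
- by rewrite mulr_ge0 // exprn_ge0.
rewrite -(ler_pM2r (exprn_gt0 (d * m)%N Y0)).
have e1 : (c1 * (((2 * (2 ^ n.+1 + b) + 1) ^ d)%N)%:R * p n ^+ m) ^+ (2*d)
    * Y ^+ (d * m)%N = c1 ^+ (2*d) * ((((2 * (2 ^ n.+1 + b) + 1) ^ d)%N)%:R) ^+ (2*d)
    * (Y ^+ d * Q) ^+ m.
  by rewrite !exprMn -!exprM [(m * (2*d))%N]mulnC; ring.
rewrite e1.
have CLn0 : 0 <= `|C| * L * n%:R by rewrite !mulr_ge0 // ltW.
apply: (le_trans (y := c1 ^+ (2*d) * (((2*b+5)%:R * X) ^+ d) ^+ (2*d)
   * (`|C| * L * n%:R) ^+ m)).
  have c10 : 0 <= c1 ^+ (2*d) by apply: exprn_ge0.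
  have h1 : c1 ^+ (2*d) * ((((2 * (2 ^ n.+1 + b) + 1) ^ d)%N)%:R) ^+ (2*d)
      <= c1 ^+ (2*d) * (((2*b+5)%:R * X) ^+ d) ^+ (2*d).
    apply: ler_wpM2l => //; apply: lerXn2r; rewrite ?nnegrE //.
    by apply: exprn_ge0; rewrite mulr_ge0 // ltW.
  have h2 : (Y ^+ d * Q) ^+ m <= (`|C| * L * n%:R) ^+ m.
    by apply: lerXn2r; rewrite ?nnegrE // mulr_ge0 // exprn_ge0 // ltW.
  apply: ler_pM h1 h2.
    by rewrite mulr_ge0 // exprn_ge0.
  by rewrite exprn_ge0 // mulr_ge0 // exprn_ge0 // ltW.
have e2 : c1 ^+ (2*d) * (((2*b+5)%:R * X) ^+ d) ^+ (2*d) * (`|C| * L * n%:R) ^+ m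
   = A * n%:R ^+ m * X ^+ (2*d*d).
  rewrite /A !exprMn -!exprM [(d * (2*d))%N]mulnC; ring.
rewrite e2.
have m0 : (0 < m)%N by rewrite /m addn1.
have two0 : (0:R) < 2 by rewrite ltr0n.
have hpe := @poly_exp R m (gam/2) n m0 (divr_gt0 gam0 two0).
have XE : X ^+ (2*d*d) = expR ((2*d*d)%:R * (n%:R * L)) by rewrite /X [RHS]expRM_natl.
apply: (le_trans (y := A' * expR (n%:R * (gam/2) + (2*d*d)%:R * (n%:R * L)))).
  have h := ler_wpM2r (expR_ge0 ((2*d*d)%:R * (n%:R * L))) (ler_wpM2l A0 hpe).
  rewrite XE; apply: (le_trans h); apply: eqle.
  by rewrite /A' expRD; ring.
apply: (le_trans (y := K ^+ (2*d) * expR (n%:R * (gam/2) + (2*d*d)%:R * (n%:R * L)))).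
  by apply: ler_wpM2r => //; apply: expR_ge0.
apply: eqle.
rewrite exprMn -exprM /r /Y -!expRM_natl -[RHS]mulrA -[in RHS]expRD.
congr (_ * expR _).
rewrite /gam /m /a; field.
by rewrite pnatr_eq0 -lt0n.
Qed.
End B.


Local Close Scope ring_scope.
Local Open Scope classical_set_scope.
Local Open Scope ring_scope.

Definition psi (d N : nat) (f : {ffun 'I_d -> 'I_(2*N+1)}) : vtx d :=
  [ffun i => ((f i : nat)%:Z - N%:Z)%R].

Arguments psi {d N}.

Lemma psi_inj d N : injective (@psi d N).
Proof.
move=> f f' /ffunP H; apply/ffunP => i; have := H i; rewrite !ffunE.
by move/addIr => /eqP; rewrite eqz_nat => /eqP /val_inj.
Qed.

Lemma psi_surj d N (z : vtx d) : box N z -> exists f, @psi d N f = z.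
Proof.
move=> hz.
have lt i : (absz (z i + N%:Z)%R < 2*N+1)%N.
  have := hz i; move: (z i) => x hx.
  have : (0 <= x + N%:Z)%R by lia.
  lia.
exists [ffun i => Ordinal (lt i)]; apply/ffunP => i; rewrite !ffunE /=.
have := hz i; move: (z i) => x hx.
have : (0 <= x + N%:Z)%R by lia.
lia.
Qed.

Definition phi {d b} (s : ({ffun 'I_d -> 'I_(2*b+1)} * 'I_d)%type) : edge d :=
  (psi s.1, s.2).

Lemma phi_inj d b : injective (@phi d b).
Proof.
by move=> [f j] [f' j'] [] /psi_inj -> ->.
Qed.

Lemma shift_inj d (z : vtx d) : injective (fun e => shift_edge e z).
Proof.
move=> [x j] [x' j'] [] /ffunP H ->; congr pair; apply/ffunP => i.
by have := H i; rewrite !ffunE => /addIr.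
Qed.

Lemma bigI_mem (T : Type) (I : eqType) (r : seq I) (F : I -> set T) om :
  (\big[setI/setT]_(i <- r) F i) om <-> (forall i, i \in r -> F i om).
Proof.
elim: r => [|x r IH]; first by rewrite big_nil; split.
rewrite big_cons; split.
  by move=> [Fx /IH H] i; rewrite inE => /orP [/eqP -> //|/H].
move=> H; split; first by apply: H; rewrite inE eqxx.
by apply/IH => i ir; apply: H; rewrite inE ir orbT.
Qed.

Lemma bigU_mem (T : Type) (I : eqType) (r : seq I) (F : I -> set T) om :
  (\big[setU/set0]_(i <- r) F i) om <-> (exists2 i, i \in r & F i om).
Proof.
elim: r => [|x r IH]; first by rewrite big_nil; split => // -[].
rewrite big_cons; split.
  move=> [Fx|/IH [i ir Fi]]; first by exists x; rewrite ?inE ?eqxx.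
  by exists i; rewrite // inE ir orbT.
move=> [i]; rewrite inE => /orP [/eqP -> Fx|ir Fi]; first by left.
by right; apply/IH; exists i.
Qed.

Lemma union_bound d (T : measurableType d) (R : realType) (P : probability T R)
  (I : Type) (r : seq I) (F : I -> set T) :
  (forall i, measurable (F i)) ->
  (P (\big[setU/set0]_(i <- r) F i) <= \sum_(i <- r) P (F i))%E.
Proof.
move=> mF; elim: r => [|x r IH]; first by rewrite !big_nil measure0.
rewrite !big_cons; apply: le_trans (measureU2 _ _ _) _ => //.
  exact: bigsetU_measurable.
by apply: leeD.
Qed.

Arguments union_bound {d T R} P {I} r F.

Lemma countable_bigcup_meas d (T : measurableType d) (U : countType)
  (D : set U) (F : U -> set T) :
  (forall i, D i -> measurable (F i)) -> measurable (\bigcup_(i in D) F i).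
Proof.
move=> mF; rewrite bigcup_mkcond; apply: countable_bigcupT_measurable.
  exact: countableP.
by move=> i; case: ifPn => // /set_mem /mF.
Qed.

Lemma countable_bigcap_meas d (T : measurableType d) (U : countType)
  (D : set U) (F : U -> set T) :
  (forall i, D i -> measurable (F i)) -> measurable (\bigcap_(i in D) F i).
Proof.
move=> mF; rewrite -[X in measurable X]setCK setC_bigcap; apply: measurableC.
by apply: countable_bigcup_meas => i /mF /measurableC.
Qed.

Section Prob.
Variables (R : realType) (d : nat) (dT : measure_display) (T : measurableType dT)
  (P : probability T R) (mu : probability R R) (w : edge d -> T -> R).
Hypothesis w_meas : forall e, measurable_fun setT (w e).
Hypothesis w_law : forall e (B : set R), measurable B -> P (w e @^-1` B) = mu B.
Hypothesis w_indep : mutually_independent P w.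

Lemma pre_meas e (B : set R) : measurable B -> measurable (w e @^-1` B).
Proof. by move=> mB; have := w_meas e measurableT _ mB; rewrite setTI. Qed.

Definition BadS b (al : R) (S : {set ({ffun 'I_d -> 'I_(2*b+1)} * 'I_d)})
  (z : vtx d) : set T :=
  [set om | forall s, s \in S -> w (shift_edge (phi s) z) om <= al].

Lemma BadS_big b al S z : BadS b al S z =
  \big[setI/setT]_(s <- enum S) (w (shift_edge (phi s) z) @^-1` `]-oo, al]).
Proof.
apply/seteqP; split => om.
  move=> H; apply/bigI_mem => s; rewrite mem_enum => /H /=.
  by rewrite in_itv.
move/bigI_mem => H s sS; have := H s; rewrite mem_enum => /(_ sS) /=.
by rewrite in_itv.
Qed.

Lemma BadS_meas b al S z : measurable (BadS b al S z).
Proof.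
rewrite BadS_big; apply: bigsetI_measurable => s _; apply: pre_meas.
exact: measurable_itv.
Qed.

Lemma prod_const_seq (I : Type) (s : seq I) (c : R) :
  \prod_(i <- s) c = c ^+ size s.
Proof.
by elim: s => [|x s IH]; rewrite ?big_nil ?expr0 // big_cons IH exprS.
Qed.

Lemma P_BadS b al (S : {set ({ffun 'I_d -> 'I_(2*b+1)} * 'I_d)}) z :
  (2*d+1 <= #|S|)%N ->
  (P (BadS b al S z) <= ((fine (mu `]-oo, al]%classic)) ^+ (2*d+1))%:E)%E.
Proof.
move=> hS.
set f := fun s => shift_edge (@phi d b s) z.
set F := [fset x in map f (enum S)]%fset.
have hF : BadS b al S z = \bigcap_(e in [set` F]) (w e @^-1` `]-oo, al]%classic).
  apply/seteqP; split => om.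
    move=> H e /=; rewrite inE => /mapP [s]; rewrite mem_enum => sS ->.
    by have := H s sS; rewrite /= in_itv.
  move=> H s sS; have := H (f s); rewrite /= in_itv /=; apply.
  by rewrite inE; apply: map_f; rewrite mem_enum.
rewrite hF w_indep; last by move=> *; exact: measurable_itv.
have mB : measurable (`]-oo, al]%classic : set R) by exact: measurable_itv.
under eq_bigr => e _ do rewrite w_law //.
have fin : mu `]-oo, al]%classic = (fine (mu `]-oo, al]%classic))%:E.
  by rewrite fineK //; apply: fin_num_measure.
rewrite fin prodEFin prod_const_seq lee_fin.
have p0 : 0 <= fine (mu `]-oo, al]%classic) by apply: fine_ge0; apply: measure_ge0.
have p1 : fine (mu `]-oo, al]%classic) <= 1.
  rewrite -lee_fin -fin; apply: le_trans (probability_le1 _ _) _ => //.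
apply: ler_wiXn2l => //.
rewrite card_fseq undup_id; last first.
  by rewrite map_inj_uniq ?enum_uniq // => x y /shift_inj /phi_inj.
by rewrite size_map -cardE.
Qed.

Lemma sum_const_fin (I : finType) (c : R) :
  (\sum_(i : I) c%:E)%E = (c *+ #|I|)%:E.
Proof.
rewrite sumEFin; congr EFin.
by rewrite -sumr_const; apply: eq_bigl => i; rewrite inE.
Qed.

Local Notation FBS b := {set ({ffun 'I_d -> 'I_(2*b+1)%N} * 'I_d)%type}.
Local Notation FFN N := {ffun 'I_d -> 'I_(2*N+1)%N}.

Definition Gev b (N : nat) (al : R) : set T :=
  \big[setU/set0]_(S : {set ({ffun 'I_d -> 'I_(2*b+1)} * 'I_d)})
   \big[setU/set0]_(f : {ffun 'I_d -> 'I_(2*N+1)})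
     (if (2*d+1 <= #|S|)%N then BadS b al S (psi f) else set0).

Lemma Gev_meas b N al : measurable (Gev b N al).
Proof.
apply: bigsetU_measurable => S _; apply: bigsetU_measurable => f _.
by case: ifP => _ //; exact: BadS_meas.
Qed.

Definition cntF b : nat := #|FBS b|.
Definition cntN (N : nat) : nat := expn (2*N+1) d.
Definition cP b N al : R := (cntF b)%:R * (cntN N)%:R
      * (fine (mu `]-oo, al]%classic)) ^+ (2*d+1).

Lemma P_Gev b N al : (P (Gev b N al) <= (cP b N al)%:E)%E.
Proof.
rewrite /cP /cntF.
set c := (fine (mu `]-oo, al]%classic)) ^+ (2*d+1).
set K1 := (cntN N)%:R : R.
apply: le_trans (union_bound P _ _ _) _.
  move=> S; apply: bigsetU_measurable => f _.
  by case: ifP => _ //; exact: BadS_meas.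
apply: (le_trans (y := (\sum_(S : FBS b) (K1 * c)%:E)%E)).
  apply: lee_sum => S _.
  apply: le_trans (union_bound P _ _ _) _.
    by move=> f; case: ifP => _ //; exact: BadS_meas.
  apply: (le_trans (y := (\sum_(f : FFN N) c%:E)%E)).
    apply: lee_sum => f _; case: ifP => hS.
      exact: P_BadS.
    by rewrite measure0 lee_fin exprn_ge0 // fine_ge0 // measure_ge0.
  by rewrite sum_const_fin card_ffun !card_ord lee_fin -mulr_natl /K1 /cntN.
by rewrite sum_const_fin lee_fin -mulrA mulr_natl.
Qed.
End Prob.

Lemma J_eq (d : nat) (T : Type) (R : realType) (w : edge d -> T -> R)
  (al : R) (S : set (edge d)) :
  J_event w al S = \bigcup_(e in S) (w e @^-1` `]al, +oo[%classic).
Proof.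
apply/seteqP; split => om [e Se h]; exists e => //.
  by rewrite /= in_itv /= andbT.
by move: h; rewrite /= in_itv /= andbT.
Qed.

Theorem corollary2p4 (R : realType) (d : nat) (hd : (2 <= d)%N)
  (dT : measure_display) (T : measurableType dT) (P : probability T R)
  (mu : probability R R) (w : edge d -> T -> R)
  (w_meas : forall e, measurable_fun setT (w e))
  (w_pos : forall e om, 0 < w e om)
  (w_law : forall e (B : set R), measurable B -> P (w e @^-1` B) = mu B)
  (w_indep : mutually_independent P w)
  (g : R -> R)
  (g_pos : forall u, 0 < u -> 0 < g u)
  (g_mono : forall u v, 0 < u -> u <= v -> g v <= g u)
  (g_lim : g x @[x --> +oo] --> 0)
  (b : nat) (hb : (2 <= b)%N)
  (hLambda : exists C U : R, forall u, U < u ->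
      Lambda d mu g u <= C * ln (ln u))
  (eps : R) (heps0 : 0 < eps) (heps1 : eps < (2 * d + 1)%:R^-1) :
  P (liminf_set (fun n : nat =>
       \bigcap_(A in [set A : {fset edge d} |
                        [set` A] `<=` edges_of (@box d b) /\ (2 * d + 1 <= #|` A|)%N])
         \bigcap_(z in @box d (n + b))
           J_event w (g ((n%:R : R) `^ (1 - eps))) (shift_edges A z))) = 1%E.
Proof.
set E := (X in liminf_set X).
have d1 : (1 <= d)%N by apply: leq_trans hd.
have heps1' : eps * (2*d+1)%:R < 1.
  have h0 : (0:R) < (2*d+1)%:R by rewrite ltr0n addn1.
  by rewrite -ltr_pdivlMr // div1r.
have eps1 : eps < 1.
  have h1 : (1:R) <= (2*d+1)%:R by rewrite ler1n addn1.
  nra.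
have a0 : 0 <= 1 - eps by rewrite subr_ge0 ltW.
case: hLambda => C [U hCU].
set p := fun k : nat => fine (mu `]-oo, g (((2^k)%:R : R) `^ (1-eps))]%classic).
have p0 : forall k, 0 <= p k by move=> k; apply: fine_ge0; apply: measure_ge0.
have hyp : forall k, U < ((2^k)%:R : R) `^ (1-eps) ->
     (((2^k)%:R : R) `^ (1-eps))^+d * p k ^+ (2*d) <=
        C * ln (ln (((2^k)%:R : R) `^ (1-eps))).
  by move=> k /hCU.
have [K [r [k0 [/andP [r0 r1] hK]]]] :=
  @analytic R d d1 eps heps0 heps1' (cntF d b)%:R (ler0n _ _) b C U p p0 hyp.
set beta := fun k : nat => g (((2^k)%:R : R) `^ (1-eps)).
set G := fun j : nat => Gev R d dT T w b (2^(j+k0).+1 + b)%N (beta (j+k0)%N).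
have Gm : forall j, measurable (G j) by move=> j; apply: Gev_meas.
have PG : forall j, (P (G j) <= (K * r^+j)%:E)%E.
  move=> j; apply: le_trans (P_Gev R d dT T P mu w w_meas w_law w_indep _ _ _) _.
  by rewrite lee_fin; exact: hK j.
have K0 : 0 <= K.
  have := PG 0%N; rewrite expr0 mulr1 => h.
  by rewrite -lee_fin; apply: le_trans h; apply: measure_ge0.
have Hsum : (\sum_(0 <= n <oo) P (G n) < +oo)%E.
  apply: (le_lt_trans (y := (K / (1 - r))%:E)); last exact: ltry.
  apply: lime_le.
    by apply: is_cvg_nneseries => n _ _; apply: measure_ge0.
  apply: nearW => n.
  apply: (le_trans (y := (\sum_(0 <= k < n) (K * r ^+ k)%:E)%E)).
    by apply: lee_sum => k _; apply: PG.
  rewrite sumEFin lee_fin.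
  have hr : `|r| < 1 by rewrite gtr0_norm.
  by have := @geometric_le_lim R n K r K0 r0 hr; rewrite /series /geometric /=.
have hLS : P (lim_sup_set G) = 0%E by apply: lim_sup_set_cvg0.
set L := liminf_set E.
have mL : measurable L.
  rewrite /L /liminf_set; apply: bigcupT_measurable => n.
  apply: bigcap_measurableType => k _; rewrite /E.
  apply: countable_bigcap_meas => A _; apply: countable_bigcap_meas => z _.
  rewrite J_eq; apply: countable_bigcup_meas => e _.
  by apply: pre_meas => //; exact: measurable_itv.
have incl : ~` L `<=` lim_sup_set G.
  move=> om Hnot n0 _.
  set n := (2 ^ (n0 + k0))%N.
  have [k [hk hE]] : exists k, (n <= k)%N /\ ~ E k om.
    apply: contrapT => H; apply: Hnot; exists n => // k /= hk.
    by apply: contrapT => hE; apply: H; exists k.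
  have [A [hA [z [hz hJ]]]] : exists A : {fset edge d},
      ([set` A] `<=` edges_of (@box d b) /\ (2 * d + 1 <= #|` A|)%N) /\
      exists z, @box d (k + b) z /\
        ~ J_event w (g ((k%:R : R) `^ (1 - eps))) (shift_edges A z) om.
    apply: contrapT => H; apply: hE => A hA z hz.
    by apply: contrapT => hJ; apply: H; exists A; split => //; exists z.
  have hw : forall e, shift_edges A z e -> w e om <= g ((k%:R : R) `^ (1 - eps)).
    move=> e he; rewrite leNgt; apply/negP => hlt; apply: hJ; by exists e.
  have kpos : (0 < k)%N by apply: leq_trans hk; rewrite expn_gt0.
  set t := trunc_log 2 k.
  have ht1 : (2 ^ t <= k)%N by apply: trunc_logP.
  have ht2 : (k < 2 ^ t.+1)%N by apply: trunc_log_ltn.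
  have hnt : (n0 + k0 < t.+1)%N.
    by rewrite -(ltn_exp2l _ _ (isT : (1 < 2)%N)); apply: leq_ltn_trans hk ht2.
  exists (t - k0)%N; first by rewrite /=; lia.
  have et : (t - k0 + k0 = t)%N by rewrite subnK //; lia.
  rewrite /G et.
  have hz' : @box d (2 ^ t.+1 + b) z.
    move=> i; apply: le_trans (hz i) _; rewrite lez_nat.
    by apply: leq_add => //; apply: ltnW.
  have [f hf] := psi_surj _ _ _ hz'.
  set S := [set s | @phi d b s \in A]%SET.
  have hcard : (#|` A| <= #|S|)%N.
    have sub : (A `<=` [fset x in map (@phi d b) (enum S)])%fset.
      apply/fsubsetP => e eA.
      have := hA.1 e eA; rewrite /edges_of /= => hb'.
      have [f0 hf0] := psi_surj _ _ _ hb'.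
      rewrite inE; apply/mapP; exists (f0, e.2).
        by rewrite mem_enum inE /phi hf0 -surjective_pairing.
      by rewrite /phi hf0 -surjective_pairing.
    apply: (leq_trans (fsubset_leq_card sub)).
    rewrite card_fseq (leq_trans (size_undup _)) //.
    by rewrite size_map -cardE.
  rewrite /Gev; apply/bigU_mem; exists S; first exact: mem_index_enum.
  apply/bigU_mem; exists f; first exact: mem_index_enum.
  rewrite ifT; last by apply: leq_trans hcard; exact: hA.2.
  move=> s; rewrite inE => hs; rewrite hf.
  apply: le_trans (hw _ _) _; first by exists (phi s).
  apply: g_mono.
    by apply: powR_gt0; rewrite ltr0n expn_gt0.
  apply: ge0_ler_powR; rewrite ?nnegrE ?ler0n //.
  by rewrite ler_nat.
have hc : P (~` L) = 0%E.
  apply/eqP; rewrite eq_le measure_ge0 andbT -hLS.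
  apply: le_measure => //; rewrite inE; first exact: measurableC.
  by apply: bigcapT_measurable => n; apply: bigcup_measurable => j _.
move: hc; rewrite probability_setC //.
rewrite -(fineK (fin_num_measure P _ mL)) -EFinB => /(congr1 fine) /= /eqP.
by rewrite subr_eq0 => /eqP <-.
Qed.
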